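(* There exists a constant $T^*>0$ such that every arc $\mathcal Z$ of a billiard trajectory in $D$ with winding number $k\in\mathbb{Z}\setminus\{0\}$ and endpoints $\mathcal Z(t_0)=(x_0,-L)$, $\mathcal Z(t_1)=(x_1,-L)\in\ell'$ has travel time $|t_1-t_0|\le T^*$; that is, the travel time is bounded uniformly in $x_0$, $x_1$ and $k$.
   Context: Fix $L,h,\beta>0$; $V_\beta(z)=-\frac1{|z|}-\frac{\beta}{|z|^2}$; $\ell=\{y=-L\}$, $\mathcal P=\{y>-L\}$. Winding number of an arc $u$ from $\ell$ to $\ell$ in $\mathcal P\setminus\{0\}$ in between: winding number around $0$ of $u$ concatenated with the oriented segment from its final to its initial point. $\hat{\mathcal Z}$ is a fixed solution of $\ddot z=-\nabla V_\beta(z)$ at energy $h$ ($\frac12|\dot z|^2+V_\beta(z)=h$) meeting $\ell$ at times $\tau_0<\tau_1$, in $\mathcal P$ on $(\tau_0,\tau_1)$, of winding number $1$, with the angle between $\dot{\hat{\mathcal Z}}(\tau_0)$ and $(1,0)$ less than $\pi/2$ and that between $(-1,0)$ and $\dot{\hat{\mathcal Z}}(\tau_1)$ greater than $\pi/2$; $\ell'$ is the segment of $\ell$ between $\hat{\mathcal Z}(\tau_0),\hat{\mathcal Z}(\tau_1)$ and $D$ the compact region bounded by $\hat{\mathcal Z}([\tau_0,\tau_1])$ and $\ell'$. An arc of a billiard trajectory is a collision-free solution of the equations of motion at energy $h$ between two consecutive hits of $\ell$. *)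

(* Defs.v *)
From Stdlib Require Export Reals ZArith.
From Coquelicot Require Export Coquelicot.
Open Scope R_scope.

Definition pnorm (p : R * R) : R := sqrt (fst p ^ 2 + snd p ^ 2).

Definition Vbeta (beta : R) (p : R * R) : R := - / pnorm p - beta / (pnorm p ^ 2).

Definition minus_gradV_x (beta : R) (p : R * R) : R :=
  - fst p / (pnorm p ^ 3) - 2 * beta * fst p / (pnorm p ^ 4).
Definition minus_gradV_y (beta : R) (p : R * R) : R :=
  - snd p / (pnorm p ^ 3) - 2 * beta * snd p / (pnorm p ^ 4).

Definition is_solution (beta h : R) (x y vx vy : R -> R) (a b : R) : Prop :=
  forall t, a <= t <= b ->
    (x t, y t) <> (0, 0) /\
    is_derive x t (vx t) /\ is_derive y t (vy t) /\
    is_derive vx t (minus_gradV_x beta (x t, y t)) /\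
    is_derive vy t (minus_gradV_y beta (x t, y t)) /\
    / 2 * (vx t ^ 2 + vy t ^ 2) + Vbeta beta (x t, y t) = h.

Definition close_arc (x y : R -> R) (a b : R) (t : R) : R * R :=
  if Rle_dec t b then (x t, y t)
  else ((1 - (t - b)) * x b + (t - b) * x a, (1 - (t - b)) * y b + (t - b) * y a).

(* winding number of the curve g on [a,b] (assumed closed) around the point p equals k:
   g avoids p and there is a continuous lift theta of the angle of g - p with
   theta b - theta a = 2 pi k. *)
Definition winding_about (g : R -> R * R) (a b : R) (p : R * R) (k : Z) : Prop :=
  a <= b /\
  (forall t, a <= t <= b -> g t <> p) /\
  exists theta : R -> R,
    (forall t, a <= t <= b -> continuous theta t) /\
    (forall t, a <= t <= b ->
       let d := (fst (g t) - fst p, snd (g t) - snd p) in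
       fst d = pnorm d * cos (theta t) /\ snd d = pnorm d * sin (theta t)) /\
    theta b - theta a = 2 * PI * IZR k.

Definition arc_winding (x y : R -> R) (a b : R) (k : Z) : Prop :=
  winding_about (close_arc x y a b) a (b + 1) (0, 0) k.

(* The compact region bounded by the arc (x,y)([a,b]) and the segment of l joining its
   endpoints: the closed curve itself together with the points around which it has
   nonzero winding number. *)
Definition bounded_region (x y : R -> R) (a b : R) (p : R * R) : Prop :=
  (exists t, a <= t <= b + 1 /\ close_arc x y a b t = p) \/
  (exists k : Z, k <> 0%Z /\ winding_about (close_arc x y a b) a (b + 1) p k).

Definition angle (u w : R * R) : R :=
  acos ((fst u * fst w + snd u * snd w) / (pnorm u * pnorm w)).

Definition in_lseg (L x0 x1 : R) (p : R * R) : Prop :=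
  snd p = - L /\ Rmin x0 x1 <= fst p <= Rmax x0 x1.

(* Main.v *)
Require Import Defs.
From Stdlib Require Import Lra Psatz.


Lemma deriv_cont f x l : is_derive f x l -> continuity_pt f x.
Proof.
  intro H. apply is_derive_Reals in H.
  apply (derivable_continuous_pt f x (exist _ l H)).
Qed.

Lemma convex_mid (g dg ddg : R -> R) (a b : R) :
  a < b ->
  (forall t, a <= t <= b -> is_derive g t (dg t)) ->
  (forall t, a <= t <= b -> is_derive dg t (ddg t)) ->
  (forall t, a <= t <= b -> 0 <= ddg t) ->
  2 * g ((a + b) / 2) <= g a + g b.
Proof.
  intros Hab Hg Hdg Hdd.
  set (m := (a + b) / 2).
  assert (Ham : a < m) by (unfold m; lra).
  assert (Hmb : m < b) by (unfold m; lra).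
  destruct (MVT_gen g a m dg) as [c1 [Hc1 E1]].
  { intros t Ht. apply Hg. rewrite Rmin_left in Ht by lra. rewrite Rmax_right in Ht by lra. lra. }
  { intros t Ht. apply deriv_cont with (dg t). apply Hg. rewrite Rmin_left in Ht by lra. rewrite Rmax_right in Ht by lra. lra. }
  rewrite Rmin_left in Hc1 by lra. rewrite Rmax_right in Hc1 by lra.
  destruct (MVT_gen g m b dg) as [c2 [Hc2 E2]].
  { intros t Ht. apply Hg. rewrite Rmin_left in Ht by lra. rewrite Rmax_right in Ht by lra. lra. }
  { intros t Ht. apply deriv_cont with (dg t). apply Hg. rewrite Rmin_left in Ht by lra. rewrite Rmax_right in Ht by lra. lra. }
  rewrite Rmin_left in Hc2 by lra. rewrite Rmax_right in Hc2 by lra.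
  destruct (MVT_gen dg c1 c2 ddg) as [c3 [Hc3 E3]].
  { intros t Ht. apply Hdg. unfold Rmin, Rmax in Ht. destruct (Rle_dec c1 c2); lra. }
  { intros t Ht. apply deriv_cont with (ddg t). apply Hdg. unfold Rmin, Rmax in Ht. destruct (Rle_dec c1 c2); lra. }
  assert (Hc3' : a <= c3 <= b) by (unfold Rmin, Rmax in Hc3; destruct (Rle_dec c1 c2); lra).
  pose proof (Hdd c3 Hc3').
  assert (dg c1 <= dg c2) by nra.
  assert (m - a = b - m) by (unfold m; lra).
  nra.
Qed.
Lemma test (x vx y vy : R -> R) t ax ay h:
  is_derive x t (vx t) -> is_derive y t (vy t) -> is_derive vx t ax -> is_derive vy t ay ->
  is_derive (fun t => x t * vx t + y t * vy t - 2*h*t) t (vx t * vx t + x t * ax + (vy t * vy t + y t * ay) - 2*h).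
Proof.
  intros Hx Hy Hvx Hvy.
  pose proof (is_derive_minus _ _ t _ _ (is_derive_plus _ _ t _ _ (is_derive_mult _ _ t _ _ Hx Hvx Rmult_comm) (is_derive_mult _ _ t _ _ Hy Hvy Rmult_comm)) (is_derive_scal (fun t=>t) t (2*h) 1 (is_derive_id t))) as D.
  unfold minus, plus, mult, opp, one in D; simpl in D.
  replace (vx t * vx t + x t * ax + (vy t * vy t + y t * ay) - 2*h) with (vx t * vx t + x t * ax + (vy t * vy t + y t * ay) + - (2*h*1)) by ring.
  exact D.
Qed.


Lemma testg (x vx y vy : R -> R) t h:
  is_derive x t (vx t) -> is_derive y t (vy t) ->
  is_derive (fun t => / 2 * (x t * x t + y t * y t) - h * (t * t)) t (x t * vx t + y t * vy t - 2*h*t).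
Proof.
  intros Hx Hy.
  pose proof (is_derive_minus _ _ t _ _ (is_derive_scal _ t (/2) _ (is_derive_plus _ _ t _ _ (is_derive_mult _ _ t _ _ Hx Hx Rmult_comm) (is_derive_mult _ _ t _ _ Hy Hy Rmult_comm))) (is_derive_scal _ t h _ (is_derive_mult _ _ t _ _ (is_derive_id t) (is_derive_id t) Rmult_comm))) as D.
  unfold minus, plus, mult, opp, one in D; simpl in D.
  replace (x t * vx t + y t * vy t - 2*h*t) with (/ 2 * (vx t * x t + x t * vx t + (vy t * y t + y t * vy t)) + - (h * (1 * t + t * 1))) by field.
  exact D.
Qed.

Lemma ddg_pos beta h X Y VX VY :
  (X, Y) <> (0, 0) ->
  / 2 * (VX ^ 2 + VY ^ 2) + Vbeta beta (X, Y) = h ->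
  0 <= VX * VX + X * minus_gradV_x beta (X, Y) + (VY * VY + Y * minus_gradV_y beta (X, Y)) - 2 * h.
Proof.
  intros Hnz HE.
  unfold Vbeta, minus_gradV_x, minus_gradV_y, pnorm in *; simpl fst in *; simpl snd in *.
  set (r := sqrt (X ^ 2 + Y ^ 2)) in *.
  assert (Hpos : 0 < X ^ 2 + Y ^ 2).
  { destruct (Req_dec X 0); destruct (Req_dec Y 0); subst; try nra. exfalso; apply Hnz; reflexivity. }
  assert (Hr : 0 < r) by (apply sqrt_lt_R0; exact Hpos).
  assert (Hr2 : r ^ 2 = X ^ 2 + Y ^ 2) by (unfold r; rewrite pow2_sqrt; lra).
  assert (E : VX * VX + X * (- X / r ^ 3 - 2 * beta * X / r ^ 4) + (VY * VY + Y * (- Y / r ^ 3 - 2 * beta * Y / r ^ 4)) - 2 * h = / r).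
  { assert (E1 : X * (- X / r ^ 3 - 2 * beta * X / r ^ 4) + Y * (- Y / r ^ 3 - 2 * beta * Y / r ^ 4) = - / r - 2 * beta / r ^ 2).
    { replace (X * (- X / r ^ 3 - 2 * beta * X / r ^ 4) + Y * (- Y / r ^ 3 - 2 * beta * Y / r ^ 4)) with (- (X^2+Y^2) / r ^ 3 - 2 * beta * (X^2+Y^2) / r ^ 4) by (field; lra).
      rewrite <- Hr2. field. lra. }
    rewrite <- HE. unfold Rdiv in *. 
    replace (VX * VX + X * (- X * / r ^ 3 - 2 * beta * X * / r ^ 4) + (VY * VY + Y * (- Y * / r ^ 3 - 2 * beta * Y * / r ^ 4)))
      with (VX * VX + VY * VY + (X * (- X * / r ^ 3 - 2 * beta * X * / r ^ 4) + Y * (- Y * / r ^ 3 - 2 * beta * Y * / r ^ 4))) by ring.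
    rewrite E1. field. lra. }
  rewrite E. left. apply Rinv_0_lt_compat; exact Hr.
Qed.

Theorem proposition3p6
  (L h beta : R) (HL : 0 < L) (Hh : 0 < h) (Hbeta : 0 < beta)
  (* the fixed solution Zhat = (xh, yh) with velocity (vxh, vyh) *)
  (xh yh vxh vyh : R -> R) (tau0 tau1 : R)
  (Htau : tau0 < tau1)
  (Hsol : is_solution beta h xh yh vxh vyh tau0 tau1)
  (Hl0 : yh tau0 = - L) (Hl1 : yh tau1 = - L)
  (HP : forall t, tau0 < t < tau1 -> yh t > - L)
  (Hwind : arc_winding xh yh tau0 tau1 1%Z)
  (Hang0 : angle (vxh tau0, vyh tau0) (1, 0) < PI / 2)
  (Hang1 : angle (-1, 0) (vxh tau1, vyh tau1) > PI / 2) :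
  exists Tstar : R, 0 < Tstar /\
    forall (x y vx vy : R -> R) (t0 t1 x0 x1 : R) (k : Z),
      (* an arc of a billiard trajectory: collision-free solution at energy h
         between two consecutive hits of l *)
      t0 < t1 ->
      is_solution beta h x y vx vy t0 t1 ->
      (x t0, y t0) = (x0, - L) -> (x t1, y t1) = (x1, - L) ->
      (forall t, t0 < t < t1 -> y t > - L) ->
      (* endpoints in l' *)
      in_lseg L (xh tau0) (xh tau1) (x0, - L) ->
      in_lseg L (xh tau0) (xh tau1) (x1, - L) ->
      (* the arc lies in D *)
      (forall t, t0 <= t <= t1 -> bounded_region xh yh tau0 tau1 (x t, y t)) ->
      (* winding number k <> 0 *)
      k <> 0%Z -> arc_winding x y t0 t1 k ->
      Rabs (t1 - t0) <= Tstar.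
Proof.
  set (A := xh tau0 ^ 2 + xh tau1 ^ 2).
  exists (1 + 2 * (A + L ^ 2) / h). split.
  { assert (0 <= A) by (unfold A; nra). apply Rplus_lt_le_0_compat; [lra|].
    apply Rmult_le_pos; [nra| left; apply Rinv_0_lt_compat; lra]. }
  intros x y vx vy t0 t1 x0 x1 k Ht Hs E0 E1 _ S0 S1 _ _ _.
  injection E0 as Ex0 Ey0. injection E1 as Ex1 Ey1.
  assert (Hc := convex_mid (fun t => / 2 * (x t * x t + y t * y t) - h * (t * t))
     (fun t => x t * vx t + y t * vy t - 2*h*t)
     (fun t => vx t * vx t + x t * minus_gradV_x beta (x t, y t) + (vy t * vy t + y t * minus_gradV_y beta (x t, y t)) - 2*h) t0 t1 Ht).
  assert (Hq : 2 * (/ 2 * (x ((t0 + t1) / 2) * x ((t0 + t1) / 2) + y ((t0 + t1) / 2) * y ((t0 + t1) / 2)) - h * ((t0 + t1) / 2 * ((t0 + t1) / 2))) <=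
     / 2 * (x t0 * x t0 + y t0 * y t0) - h * (t0 * t0) + (/ 2 * (x t1 * x t1 + y t1 * y t1) - h * (t1 * t1))).
  { apply Hc.
    - intros t Hti. destruct (Hs t Hti) as (_ & Hx & Hy & _). apply testg; assumption.
    - intros t Hti. destruct (Hs t Hti) as (_ & Hx & Hy & Hvx & Hvy & _). apply test; assumption.
    - intros t Hti. destruct (Hs t Hti) as (Hnz & _ & _ & _ & _ & HE). apply ddg_pos; assumption. }
  clear Hc.
  rewrite Ex0, Ey0, Ex1, Ey1 in Hq.
  assert (B0 : x0 ^ 2 <= A).
  { destruct S0 as [_ H1]; simpl in H1; unfold Rmin, Rmax in H1; unfold A.
    destruct (Rle_dec (xh tau0) (xh tau1)); destruct (Rle_dec 0 x0); destruct (Rle_dec 0 x1); nra. }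
  assert (B1 : x1 ^ 2 <= A).
  { destruct S1 as [_ H1]; simpl in H1; unfold Rmin, Rmax in H1; unfold A.
    destruct (Rle_dec (xh tau0) (xh tau1)); destruct (Rle_dec 0 x0); destruct (Rle_dec 0 x1); nra. }
  set (T := t1 - t0).
  assert (HT : h * (T * T) <= 2 * (A + L ^ 2)).
  { unfold T. set (xm := x ((t0 + t1) / 2)) in *. set (ym := y ((t0 + t1) / 2)) in *. nra. }
  rewrite Rabs_right by (unfold T; lra).
  assert (T * T <= 2 * (A + L ^ 2) / h).
  { apply (Rmult_le_reg_l h); [lra|]. replace (h * (2 * (A + L ^ 2) / h)) with (2 * (A + L ^ 2)) by (field; lra). lra. }
  nra.
Qed.
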